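(* Let $d\ge 1$, let $\Omega\subset\mathbb{R}^d$ be a bounded domain, let $f:\Omega\to\mathbb{R}^d$ be an input function, let $g\in\mathbb{R}^d$ and let $R\in\mathbb{R}^{d\times d}$ be an orthogonal matrix. Define the transformed domain $\tilde\Omega:=\{Rx+g: x\in\Omega\}$ and the transformed input $\tilde f:\tilde\Omega\to\mathbb{R}^d$ by $\tilde f(Rx+g):=Rf(x)$. Let $\tilde{\mathcal{G}}[\,\cdot\,;\theta]$ be the INO-scalar operator described in the context, with any fixed parameter set $\theta$. Then for every $x\in\Omega$, $$\tilde{\mathcal{G}}[\tilde f;\theta](Rx+g)=\tilde{\mathcal{G}}[f;\theta](x),$$ where the left-hand side is computed on the domain $\tilde\Omega$ and the right-hand side on $\Omega$. That is, the INO-scalar architecture is translation- and rotation-invariant.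
   Context: INO-scalar architecture. Fix integers $d_h\ge1$, $L\ge1$, $d_Q\ge 1$, a fictitious time step $\tau>0$, and an activation function $\sigma:\mathbb{R}\to\mathbb{R}$ (applied componentwise). The parameter set $\theta$ consists of $P,p\in\mathbb{R}^{d_h}$, $W\in\mathbb{R}^{d_h\times d_h}$, $c\in\mathbb{R}^{d_h}$, a kernel function $\kappa(\cdot;v)$ with values in $\mathbb{R}^{d_h\times d_h}$ (e.g. an MLP with parameters $v$), and $Q_1\in\mathbb{R}^{d_Q\times d_h}$, $q_1\in\mathbb{R}^{d_Q}$, $Q_2\in\mathbb{R}^{1\times d_Q}$, $q_2\in\mathbb{R}$. Edge encoding: for a pair of points $x,y$ in the domain, $\overline{y-x}$ denotes a frame-invariant encoding of the edge from $x$ to $y$; in 2D it is $\overline{y-x}:=[|y-x|\cos\vartheta,\ |y-x|\sin\vartheta]$, where $|\cdot|$ is the Euclidean norm and $\vartheta$ is the orientation of $y-x$ relative to a local reference edge fixed in the body (e.g. the vector between two fixed nodes of the undeformed configuration); in 3D it is built analogously from $|y-x|$ and two orientation angles. Since the reference edge moves with the body, the encoding attached to the pair $(Rx+g,Ry+g)$ in the transformed frame coincides with the encoding $\overline{y-x}$ attached to $(x,y)$. Given an input $f$ on a domain $\Omega$, the operator is defined by: lifting $h(x,0):=P|f(x)|+p$; kernel $m(x,y):=\kappa(\overline{y-x},|f(x)|,|f(y)|;v)$; iterative layers, for $j=0,\dots,L-1$, $$h(x,(j+1)\tau):=h(x,j\tau)+\tau\,\sigma\Big(Wh(x,j\tau)+\int_\Omega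 m(x,y)h(y,j\tau)\,dy+c\Big);$$ projection $\tilde{\mathcal{G}}[f;\theta](x):=Q_2\sigma(Q_1h(x,L\tau)+q_1)+q_2$. All integrals are assumed to exist. *)

(* Defs.v *)
From HB Require Import structures.
From mathcomp Require Import all_boot all_order all_algebra.
From mathcomp Require Import all_classical all_reals all_analysis.

Set Implicit Arguments.
Unset Strict Implicit.
Unset Printing Implicit Defensive.

Import Order.TTheory GRing.Theory Num.Theory.
Import numFieldNormedType.Exports.
Local Open Scope classical_set_scope.
Local Open Scope ring_scope.

Definition enorm {R : realType} {n : nat} (v : 'cV[R]_n) : R :=
  Num.sqrt (\sum_(i < n) v i ord0 ^+ 2).

Definition orthogonal_mx {R : realType} {n : nat} (Q : 'M[R]_n) : Prop :=
  Q^T *m Q = 1%:M.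

Definition bounded_domain {R : realType} {d : nat} (O : set 'cV[R]_d) : Prop :=
  O !=set0 /\ open O /\ connected O /\ exists M : R, forall x, O x -> enorm x <= M.

Definition Rd_borel (R : realType) (d : nat) :=
  g_sigma_algebraType (@open 'cV[R]_d).

Definition box {R : realType} {d : nat} (a b : 'cV[R]_d) : set 'cV[R]_d :=
  [set x | forall i, a i ord0 < x i ord0 <= b i ord0].

(* mu is the d-dimensional Lebesgue measure (on Borel sets): it is a measure
   assigning to every box its volume.  Such a measure exists and is unique. *)
Definition is_lebesgue_measure {R : realType} {d : nat}
  (mu : {measure set (Rd_borel R d) -> \bar R}) : Prop :=
  forall a b : 'cV[R]_d, (forall i, a i ord0 <= b i ord0) ->
    mu (box a b : set (Rd_borel R d)) = (\prod_(i < d) (b i ord0 - a i ord0))%:E.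

(* Parameters theta of INO-scalar.  k is the dimension of the edge encoding.
   The kernel network kappa(.; v) is represented by the function it computes. *)
Record ino_params (R : realType) (k dh dQ : nat) := InoParams {
  ino_P : 'cV[R]_dh;
  ino_p : 'cV[R]_dh;
  ino_W : 'M[R]_dh;
  ino_c : 'cV[R]_dh;
  ino_kappa : 'cV[R]_k -> R -> R -> 'M[R]_dh;
  ino_Q1 : 'M[R]_(dQ, dh);
  ino_q1 : 'cV[R]_dQ;
  ino_Q2 : 'M[R]_(1, dQ);
  ino_q2 : R }.

Section INO.
Variables (R : realType) (d k dh dQ L : nat) (tau : R) (sigma : R -> R).
Variable (mu : {measure set (Rd_borel R d) -> \bar R}).
Variable (th : ino_params R k dh dQ).
(* domain, edge encoding on that domain (enc x y = encoding of edge x -> y),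
   input function *)
Variables (Om : set 'cV[R]_d) (enc : 'cV[R]_d -> 'cV[R]_d -> 'cV[R]_k)
          (f : 'cV[R]_d -> 'cV[R]_d).

Definition ino_kernel (x y : 'cV[R]_d) : 'M[R]_dh :=
  ino_kappa th (enc x y) (enorm (f x)) (enorm (f y)).

Definition ino_int (h : 'cV[R]_d -> 'cV[R]_dh) (x : 'cV[R]_d) : 'cV[R]_dh :=
  \col_(i < dh) Rintegral mu (Om : set (Rd_borel R d))
                  (fun y : Rd_borel R d => (ino_kernel x y *m h y) i ord0).

Fixpoint ino_hidden (j : nat) : 'cV[R]_d -> 'cV[R]_dh :=
  match j with
  | 0 => fun x => enorm (f x) *: ino_P th + ino_p th
  | j'.+1 => fun x =>
      let h := ino_hidden j' in
      h x + tau *: map_mx sigma (ino_W th *m h x + ino_int h x + ino_c th)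
  end.

Definition ino_scalar (x : 'cV[R]_d) : R :=
  (ino_Q2 th *m map_mx sigma (ino_Q1 th *m ino_hidden L x + ino_q1 th)) ord0 ord0
  + ino_q2 th.

End INO.

(* Main.v *)
Require Import Defs.
From HB Require Import structures.
From mathcomp Require Import all_boot all_order all_algebra.
From mathcomp Require Import all_classical all_reals all_analysis.
From mathcomp Require Import ring lra.
Import Order.TTheory GRing.Theory Num.Theory.
Import numFieldNormedType.Exports.
Local Open Scope classical_set_scope.
Local Open Scope ring_scope.

Module Transport.
Import HBNNSimple.
Section transport.
Context d (T : measurableType d) (R : realType) (mu : {measure set T -> \bar R}).
Variable S : T -> T.
Hypothesis mS : measurable_fun setT S.
Hypothesis pS : forall A, measurable A -> mu (S @^-1` A) = mu A.

Section comp.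
Variable h : {nnsfun T >-> R}.
Definition hS := fun x => h (S x).
Lemma hS_mf : measurable_fun setT hS.
Proof. exact: measurableT_comp. Qed.
HB.instance Definition _ := isMeasurableFun.Build _ _ _ _ hS hS_mf.
Lemma hS_fin : finite_set (range hS).
Proof. apply: sub_finite_set (fimfunP h) => _ [x _ <-]; by exists (S x). Qed.
HB.instance Definition _ := FiniteImage.Build _ _ hS hS_fin.
Lemma hS_ge0 x : (0 <= hS x)%R.
Proof. by rewrite /hS. Qed.
HB.instance Definition _ := isNonNegFun.Build _ _ hS hS_ge0.
Definition hSn : {nnsfun T >-> R} := hS.
Lemma sintegral_hS : sintegral mu hSn = sintegral mu h.
Proof.
rewrite /sintegral; apply: eq_fsbigr => r _.
congr (_ * _)%E.
have -> : hSn @^-1` [set r] = S @^-1` (h @^-1` [set r]) by [].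
apply: pS.
rewrite -[X in measurable X]setTI; apply: (measurable_funP h) => //.
Qed.
End comp.

Local Open Scope ereal_scope.
Lemma nn_le (phi : T -> \bar R) :
  ereal_sup [set sintegral mu h | h in [set h : {nnsfun T >-> R} | forall x, (h x)%:E <= phi x]]
  <= ereal_sup [set sintegral mu h | h in [set h : {nnsfun T >-> R} | forall x, (h x)%:E <= phi (S x)]].
Proof.
apply: ge_ereal_sup => _ [h hphi <-].
rewrite -sintegral_hS; apply: ereal_sup_ubound; exists (hSn h) => //.
by move=> x; exact: hphi.
Qed.
End transport.
Section transport2.
Local Open Scope ereal_scope.
Context d (T : measurableType d) (R : realType) (mu : {measure set T -> \bar R}).
Variables S Si : T -> T.
Hypothesis mS : measurable_fun setT S.
Hypothesis pS : forall A, measurable A -> mu (S @^-1` A) = mu A.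
Hypothesis mSi : measurable_fun setT Si.
Hypothesis pSi : forall A, measurable A -> mu (Si @^-1` A) = mu A.
Hypothesis SSi : forall x, S (Si x) = x.

Lemma nn_eq (phi psi : T -> \bar R) : (forall x, psi x = phi (S x)) ->
  ereal_sup [set sintegral mu h | h in [set h : {nnsfun T >-> R} | forall x, (h x)%:E <= phi x]]
  = ereal_sup [set sintegral mu h | h in [set h : {nnsfun T >-> R} | forall x, (h x)%:E <= psi x]].
Proof.
move=> E; apply: le_anti; apply/andP; split.
  have -> : psi = (fun x => phi (S x)) by apply: funext.
  exact: nn_le.
have -> : phi = (fun x => psi (Si x)) by apply: funext => x; rewrite E SSi.
exact: nn_le.
Qed.

Lemma integral_transport D (f : T -> \bar R) :
  \int[mu]_(x in D) f x = \int[mu]_(x in S @^-1` D) f (S x).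
Proof.
rewrite /integral /=; congr (_ - _); apply: nn_eq => x;
  by rewrite ?funeposE ?funenegE /patch.
Qed.
End transport2.

End Transport.
Import Transport.

Section borel.
Variables (R : realType) (d : nat).
Local Notation V := 'cV[R]_d.
Local Notation B := (Rd_borel R d).

Lemma mB_open (U : set V) : open U -> measurable (U : set B).
Proof. by move=> oU; apply: sub_sigma_algebra. Qed.

Lemma mB_gt (phi : V -> R) c : continuous phi ->
  measurable ([set x | c < phi x] : set B).
Proof.
move=> cphi; apply: mB_open.
apply: (@open_comp _ _ phi [set x | c < x]); last exact: open_gt.
by move=> x _; exact: cphi.
Qed.

Lemma mB_le (phi : V -> R) c : continuous phi ->
  measurable ([set x | phi x <= c] : set B).
Proof.
move=> cphi.
have -> : [set x | phi x <= c] = ~` [set x | c < phi x].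
  apply/seteqP; split => x /=; rewrite ltNge.
    by move=> h /negP; apply.
  by move/negP/negbNE.
by apply: measurableC; apply: mB_gt.
Qed.

Lemma mB_box a b : measurable (box a b : set B).
Proof.
have -> : box a b = \bigcap_(i in [set: 'I_d])
   ([set x : V | a i ord0 < x i ord0] `&` [set x | x i ord0 <= b i ord0]).
  apply/seteqP; split => x /=.
    by move=> h i _; have /andP[] := h i.
  by move=> h i; have [-> ->] := h i I.
apply: fin_bigcap_measurable; first exact: finite_finset.
move=> i _; apply: measurableI; [apply: mB_gt | apply: mB_le];
  exact: coord_continuous.
Qed.

Definition boxG : set (set V) := [set A | exists a b, A = box a b].

Lemma open_box (U : set V) : open U -> <<s boxG >> U.
Proof.
move=> oU.
pose I := ('cV[rat]_d * 'cV[rat]_d)%type.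
pose rb (n : nat) : set V := match (unpickle n : option I) with
  | Some ab => let A := box (map_mx ratr ab.1) (map_mx ratr ab.2) in
      if pselect (A `<=` U) then A else set0
  | None => set0 end.
have -> : U = \bigcup_n rb n.
  apply/seteqP; split => [x Ux|x [n _ hn]]; last first.
    move: hn; rewrite /rb; case: unpickle => [ab|//].
    by case: pselect => // sAU /= hx; apply: sAU.
  rewrite openE in oU.
  have /nbhs_ballP [e /= e0 He] := oU x Ux.
  have hq : forall i : 'I_d, exists q : rat * rat,
      x i ord0 - e < ratr q.1 < x i ord0 /\ x i ord0 <= ratr q.2 < x i ord0 + e.
    move=> i.
    have [q1 /[!in_itv] /= h1] := @rat_in_itvoo R (x i ord0 - e) (x i ord0)
       ltac:(by rewrite ltrBlDr ltrDl).
    have [q2 /[!in_itv] /= /andP [h2 h2']] := @rat_in_itvoo R (x i ord0) (x i ord0 + e)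
       ltac:(by rewrite ltrDl).
    by exists (q1, q2); split => //; rewrite h2' (ltW h2).
  have [qf Hq] := choice hq.
  pose qa : 'cV[rat]_d := \col_i (qf i).1.
  pose qb : 'cV[rat]_d := \col_i (qf i).2.
  exists (pickle ((qa, qb) : I)) => //.
  rewrite /rb pickleK /=.
  have sub : box (map_mx ratr qa) (map_mx ratr qb) `<=` U.
    move=> y /= hy; apply: He; split => // i j; rewrite (ord1 j).
    have := hy i; rewrite !mxE => /andP[h1 h2].
    have [/andP[q1 q2] /andP[q3 q4]] := Hq i.
    rewrite -ball_normE /= ltr_distlC.
    apply/andP; split; [apply: lt_trans q1 h1 | apply: le_lt_trans h2 q4].
  case: pselect => // _ i; rewrite !mxE.
  by have [/andP[_ ->] /andP[-> _]] := Hq i.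
apply: sigma_algebra_bigcup => n; rewrite /rb; case: unpickle => [ab|]; last first.
  exact: sigma_algebra0.
by case: pselect => ?; [apply: sub_sigma_algebra; do 2 eexists|exact: sigma_algebra0].
Qed.

Lemma B_boxgen : (@measurable _ B) = <<s boxG >>.
Proof.
apply/seteqP; split.
  apply: smallest_sub; first exact: smallest_sigma_algebra.
  by move=> U oU; apply: open_box.
apply: smallest_sub; first exact: sigma_algebra_measurable.
by move=> _ [a [b ->]]; apply: mB_box.
Qed.

Lemma box_inter (a b a' b' : V) : box a b `&` box a' b' =
  box (\col_i Num.max (a i ord0) (a' i ord0)) (\col_i Num.min (b i ord0) (b' i ord0)).
Proof.
apply/seteqP; split => x /=.
  move=> [h h'] i; rewrite !mxE gt_max le_min.
  by have /andP[-> ->] := h i; have /andP[-> ->] := h' i.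
move=> h; split => i; have := h i; rewrite !mxE gt_max le_min;
  by case/andP => /andP[? ?] /andP[? ?]; apply/andP.
Qed.

Lemma box_empty (a b : V) : ~ (forall i, a i ord0 <= b i ord0) -> box a b = set0.
Proof.
move=> /existsNP [i /negP]; rewrite -ltNge => hi.
apply/seteqP; split => // x /(_ i) /andP[h1 h2].
by have := lt_le_trans h1 h2; rewrite ltNge (ltW hi).
Qed.

Lemma box_unique (m1 m2 : {measure set B -> \bar R}) :
  (forall a b : V, (forall i, a i ord0 <= b i ord0) -> m1 (box a b) = m2 (box a b)) ->
  (forall a b : V, (m1 (box a b) < +oo)%E) ->
  forall A : set B, measurable A -> m1 A = m2 A.
Proof.
move=> h12 hfin A mA.
pose g (n : nat) : set B := box (const_mx (- n%:R)) (const_mx n%:R).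
apply: (@measure_unique _ R B (boxG : set (set B)) g) => //.
- exact: B_boxgen.
- move=> _ _ [a [b ->]] [a' [b' ->]]; rewrite box_inter; do 2 eexists; reflexivity.
- by move=> n; do 2 eexists.
- apply/seteqP; split => // x _.
  pose s := \sum_j `|x j ord0|.
  exists (Num.truncn s).+1 => // i; rewrite !mxE.
  have hs : `|x i ord0| < (Num.truncn s).+1%:R.
    apply: le_lt_trans (truncnS_gt s).
    by rewrite /s (bigD1 i) //= lerDl sumr_ge0.
  rewrite ltrNl (le_lt_trans _ hs) ?ler_normr ?lexx ?orbT //=.
  by rewrite (le_trans _ (ltW hs)) // ler_norm.
- move=> _ [a [b ->]]; case: (pselect (forall i, a i ord0 <= b i ord0)) => hn.
    exact: h12.
  by rewrite box_empty // !measure0.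
by move=> k; apply: hfin.
Qed.

End borel.

Section affine.
Variables (R : realType) (d : nat).
Local Notation V := 'cV[R]_d.
Local Notation B := (Rd_borel R d).

Lemma cont_sum (s : seq 'I_d) (F : 'I_d -> V -> R) :
  (forall j, continuous (F j)) -> continuous (fun x => \sum_(j <- s) F j x).
Proof.
move=> cF; elim: s => [|j s IH].
  have -> : (fun x => \sum_(j <- [::]) F j x) = (fun=> 0) by apply: funext => x; rewrite big_nil.
  exact: cst_continuous.
have -> : (fun x => \sum_(k <- j :: s) F k x) = (F j + (fun x => \sum_(k <- s) F k x)).
  by apply: funext => x; rewrite big_cons.
by move=> x; apply: continuousD; [exact: cF | exact: IH].
Qed.

Lemma cont_aff (M : 'M[R]_d) (v : V) i : continuous (fun x : V => (M *m x + v) i ord0).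
Proof.
have -> : (fun x : V => (M *m x + v) i ord0) =
    (fun x => \sum_(j <- index_enum 'I_d) (fun j x => M i j * x j ord0) j x) + (fun=> v i ord0).
  by apply: funext => x; rewrite !mxE.
move=> x; apply: continuousD; last exact: cst_continuous.
apply: cont_sum => j y.
apply: (@continuousM _ _ (fun=> M i j) (fun x : V => x j ord0)).
  exact: cst_continuous.
exact: coord_continuous.
Qed.

Lemma cont_shift (v : V) i : continuous (fun x : V => (x + v) i ord0).
Proof.
have -> : (fun x : V => (x + v) i ord0) = (fun x : V => x i ord0) + (fun=> v i ord0).
  by apply: funext => x; rewrite !mxE.
move=> x; apply: continuousD; [exact: coord_continuous | exact: cst_continuous].
Qed.

Lemma mB_boxF (F : V -> V) a b : (forall i, continuous (fun x => F x i ord0)) ->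
  measurable (F @^-1` box a b : set B).
Proof.
move=> cF.
have -> : F @^-1` box a b = \bigcap_(i in [set: 'I_d])
   ([set x : V | a i ord0 < F x i ord0] `&` [set x | F x i ord0 <= b i ord0]).
  apply/seteqP; split => x /=.
    by move=> h i _; have /andP[] := h i.
  by move=> h i; have [-> ->] := h i I.
apply: fin_bigcap_measurable; first exact: finite_finset.
move=> i _; apply: measurableI; [apply: mB_gt | apply: mB_le]; exact: cF.
Qed.

Lemma mB_fun (F : V -> V) : (forall i, continuous (fun x => F x i ord0)) ->
  measurable_fun (setT : set B) (F : B -> B).
Proof.
move=> cF; apply: (measurability _ (B_boxgen R d)).
move=> _ [_ [a [b ->]] <-]; rewrite setTI; exact: mB_boxF.
Qed.

Variable mu : {measure set B -> \bar R}.
Hypothesis hmu : is_lebesgue_measure mu.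

Lemma box_fin (a b : V) : (mu (box a b) < +oo)%E.
Proof.
case: (pselect (forall i, a i ord0 <= b i ord0)) => h.
  by rewrite hmu // ltry.
by rewrite box_empty // measure0 ltry.
Qed.

Lemma shift_box (a b v : V) : (fun x => x + v) @^-1` box a b = box (a - v) (b - v).
Proof.
apply/seteqP; split => x /= h i; have := h i; rewrite !mxE.
  by rewrite ltrBlDr lerBrDr.
by rewrite ltrBlDr lerBrDr.
Qed.

Lemma leb_shift (v : V) (A : set B) : measurable A ->
  mu ((fun x => x + v) @^-1` A) = mu A.
Proof.
have mf : measurable_fun (setT : set B) (fun x : B => (x + v : B)).
  by apply: mB_fun => i; exact: cont_shift.
move=> mA.
apply: (@box_unique R d (pushforward mu (fun x : B => (x + v : B))) mu) => //.
  move=> a b hab; transitivity (mu (box (a - v) (b - v))); first by rewrite -shift_box.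
  rewrite !hmu //.
    by congr (_%:E); apply: eq_bigr => i _; rewrite !mxE opprB addrA subrK.
  by move=> i; rewrite !mxE lerD2r.
by move=> a b; have := box_fin (a - v) (b - v); rewrite -shift_box.
Qed.

End affine.

Lemma add_mono_linear (R : realType) (f : R -> R) :
  (forall s, 0 <= s -> 0 <= f s) ->
  (forall s t, 0 <= s -> 0 <= t -> f (s + t) = f s + f t) ->
  forall t, 0 <= t -> f t = t * f 1.
Proof.
move=> f0 fD.
have fz : f 0 = 0.
  by have := fD 0 0 (lexx _) (lexx _); rewrite addr0 => h; lra.
have fn : forall n t, 0 <= t -> f (n%:R * t) = n%:R * f t.
  move=> n t t0; elim: n => [|n IH]; first by rewrite !mul0r fz.
  by rewrite -addn1 natrD !mulrDl !mul1r fD ?mulr_ge0 // IH.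
have fm : forall s t, 0 <= s -> s <= t -> f s <= f t.
  move=> s t s0 st; have -> : t = s + (t - s) by rewrite addrC subrK.
  by rewrite fD ?subr_ge0 // lerDl f0 // subr_ge0.
move=> t t0.
have f10 := f0 1 ler01.
have key : forall n : nat, (0 < n)%N -> n%:R * `|f t - t * f 1| <= f 1.
  move=> n n0.
  pose m := Num.truncn (n%:R * t).
  have hm1 : m%:R <= n%:R * t by rewrite truncn_le mulr_ge0.
  have hm2 : n%:R * t < m.+1%:R by apply: truncnS_gt.
  have e1 : f (m%:R) = m%:R * f 1 by rewrite -[X in f X]mulr1 fn // mulr1.
  have e2 : f (m.+1%:R) = m.+1%:R * f 1 by rewrite -[X in f X]mulr1 fn // mulr1.
  have l1 : f (m%:R) <= f (n%:R * t) by apply: fm.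
  have l2 : f (n%:R * t) <= f (m.+1%:R) by apply: fm; rewrite ?mulr_ge0 // ltW.
  rewrite fn // e1 in l1; rewrite fn // e2 in l2.
  rewrite -normr_nat -normrM ler_norml; apply/andP; split.
    have hS : m.+1%:R = m%:R + 1 :> R by rewrite -addn1 natrD.
    rewrite hS in hm2 l2; nra.
  have hS : m.+1%:R = m%:R + 1 :> R by rewrite -addn1 natrD.
  rewrite hS in hm2 l2; nra.
apply/eqP; rewrite -subr_eq0 -normr_eq0; apply/eqP.
apply: le_anti; rewrite normr_ge0 andbT.
rewrite leNgt; apply/negP => h.
pose n := (Num.truncn (f 1 / `|f t - t * f 1|)).+1.
have := key n isT.
rewrite leNgt => /negP; apply.
rewrite -ltr_pdivrMr //.
exact: truncnS_gt.
Qed.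

Section rotation.
Variables (R : realType) (d : nat).
Local Notation V := 'cV[R]_d.
Local Notation B := (Rd_borel R d).
Variable mu : {measure set B -> \bar R}.
Hypothesis hmu : is_lebesgue_measure mu.
Variable Q : 'M[R]_d.
Hypothesis hQ : Q^T *m Q = 1%:M.

Let hQ' : Q *m Q^T = 1%:M. Proof. exact: mulmx1C. Qed.

Definition Lmap (x : B) : B := Q *m x.

Lemma mL : measurable_fun setT Lmap.
Proof.
apply: mB_fun => i.
have -> : (fun x : V => (Q *m x) i ord0) = (fun x => (Q *m x + 0) i ord0).
  by apply: funext => x; rewrite addr0.
exact: cont_aff.
Qed.

Lemma mLpre (A : set B) : measurable A -> measurable (Lmap @^-1` A).
Proof. by move=> mA; rewrite -[X in measurable X]setTI; apply: mL. Qed.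

Lemma nu_shift (v : V) (A : set B) : measurable A ->
  pushforward mu Lmap ((fun x => x + v) @^-1` A) = pushforward mu Lmap A.
Proof.
move=> mA; rewrite /pushforward.
have -> : Lmap @^-1` ((fun x => x + v) @^-1` A) =
    (fun x => x + Q^T *m v) @^-1` (Lmap @^-1` A).
  apply/seteqP; split => x /=; rewrite /Lmap mulmxDr mulmxA hQ' mul1mx //.
by rewrite leb_shift //; exact: mLpre.
Qed.

Lemma nu_fin (a b : V) : (pushforward mu Lmap (box a b) < +oo)%E.
Proof.
pose K := \sum_j (`|a j ord0| + `|b j ord0|).
pose r : V := \col_k (\sum_j `|Q j k| * K + 1).
apply: le_lt_trans (@box_fin R d mu hmu (- r) r).
rewrite /pushforward; apply: le_measure; rewrite ?inE.
- by apply: mLpre; apply: mB_box.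
- exact: mB_box.
move=> x /= hx k; rewrite !mxE.
have hy : forall j, `|(Q *m x) j ord0| <= K.
  move=> j; apply: le_trans (_ : `|a j ord0| + `|b j ord0| <= K); last first.
    by rewrite /K (bigD1 j) //= lerDl sumr_ge0 // => ? _; rewrite addr_ge0.
  have /andP[h1 h2] := hx j.
  have := ler_norm (b j ord0); have := ler_norm (- a j ord0); rewrite normrN.
  have := normr_ge0 (a j ord0); have := normr_ge0 (b j ord0).
  move=> *; rewrite ler_norml; apply/andP; split; lra.
have ex : x = Q^T *m (Q *m x) by rewrite mulmxA hQ mul1mx.
have hk : `|x k ord0| <= \sum_j `|Q j k| * K.
  rewrite {1}ex mxE; apply: le_trans (ler_norm_sum _ _ _) _.
  apply: ler_sum => j _; rewrite mxE normrM; apply: ler_wpM2l => //.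
have := hk; rewrite ler_norml => /andP[h1 h2].
apply/andP; split; lra.
Qed.

Lemma nu_finE (t : V) : pushforward mu Lmap (box 0 t) = (fine (pushforward mu Lmap (box 0 t)))%:E.
Proof.
rewrite fineK // ge0_fin_numE ?nu_fin //.
by rewrite /pushforward; apply: measure_ge0; apply: mLpre; apply: mB_box.
Qed.

Definition Fb (t : V) := fine (pushforward mu Lmap (box 0 t)).

Lemma Fb_ge0 t : 0 <= Fb t.
Proof.
by apply: fine_ge0; rewrite /pushforward; apply: measure_ge0; apply: mLpre; apply: mB_box.
Qed.

Definition upd (t : V) (i : 'I_d) (s : R) : V := \col_j (if j == i then s else t j ord0).

Lemma Fb_add t i s u : 0 <= s -> 0 <= u ->
  Fb (upd t i (s + u)) = Fb (upd t i s) + Fb (upd t i u).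
Proof.
move=> s0 u0.
pose w : V := \col_j (if j == i then s else 0).
have E : box 0 (upd t i (s + u)) =
    box 0 (upd t i s) `|` ((fun x => x + - w) @^-1` box 0 (upd t i u)).
  apply/seteqP; split => x /=.
    move=> h; case: (leP (x i ord0) s) => xs; [left|right] => j; have := h j;
      rewrite !mxE; case: eqP => [->|_] /andP[h1 h2]; apply/andP; split; lra.
  move=> [] h j; have := h j; rewrite !mxE; case: eqP => [->|_] /andP[h1 h2];
    apply/andP; split; lra.
have D : box 0 (upd t i s) `&` ((fun x => x + - w) @^-1` box 0 (upd t i u)) = set0.
  apply/seteqP; split => // x /= [h h']; have := h i; have := h' i.
  rewrite !mxE eqxx => /andP[h1 h2] /andP[h3 h4]; lra.
apply: EFin_inj; rewrite EFinD /Fb -!nu_finE E.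
have mw : measurable ((fun x => x + - w) @^-1` box 0 (upd t i u) : set B).
  by apply: mB_boxF => j; exact: cont_shift.
rewrite /pushforward preimage_setU measureU //; last first.
- by rewrite -preimage_setI D preimage_set0.
- exact: mLpre.
- by apply: mLpre; apply: mB_box.
by congr (_ + _)%E; exact: (nu_shift (- w) _ (mB_box _ _ 0 (upd t i u))).
Qed.

Lemma Fb_lin t i s : 0 <= s -> Fb (upd t i s) = s * Fb (upd t i 1).
Proof.
move=> s0.
apply: (@add_mono_linear R (fun s => Fb (upd t i s))) => //.
- by move=> ? _; exact: Fb_ge0.
- by move=> ? ? ? ?; exact: Fb_add.
Qed.

Lemma Fb_prod (sq : seq 'I_d) (t : V) : uniq sq -> (forall i, 0 <= t i ord0) ->
  Fb t = (\prod_(i <- sq) t i ord0) * Fb (\col_i (if i \in sq then 1 else t i ord0)).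
Proof.
move=> + t0; elim: sq => [|i sq IH] /=.
  move=> _; rewrite big_nil mul1r; congr Fb; apply/matrixP => j k.
  by rewrite !mxE (ord1 k).
move=> /andP[isq usq]; rewrite (IH usq) big_cons [t i ord0 * _]mulrC -mulrA; congr (_ * _).
have -> : (\col_i0 (if i0 \in sq then 1 else t i0 ord0) : V) =
    upd (\col_i0 (if i0 \in sq then 1 else t i0 ord0)) i (t i ord0).
  apply/matrixP => j k; rewrite !mxE; case: eqP => [->|//].
  by rewrite (negbTE isq).
rewrite Fb_lin //; congr (_ * Fb _); apply/matrixP => j k.
rewrite !mxE inE; case: eqP => [->|] //=.
Qed.

Definition cF := Fb (const_mx 1).

Lemma Fb_box (t : V) : (forall i, 0 <= t i ord0) ->
  Fb t = (\prod_(i < d) t i ord0) * cF.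
Proof.
move=> t0; rewrite (@Fb_prod (index_enum 'I_d) t (index_enum_uniq 'I_d) t0); congr (_ * Fb _).
by apply/matrixP => j k; rewrite !mxE mem_index_enum.
Qed.

Lemma nu_box (a b : V) : (forall i, a i ord0 <= b i ord0) ->
  pushforward mu Lmap (box a b) = ((\prod_(i < d) (b i ord0 - a i ord0)) * cF)%:E.
Proof.
move=> hab.
have -> : box a b = (fun x => x + - a) @^-1` box 0 (b - a).
  by rewrite shift_box sub0r !opprK subrK.
rewrite nu_shift; last exact: mB_box.
rewrite nu_finE -/(Fb _) Fb_box; last by move=> i; rewrite !mxE subr_ge0.
by congr ((_ * _)%:E); apply: eq_bigr => i _; rewrite !mxE.
Qed.

Lemma cF_ge0 : 0 <= cF. Proof. exact: Fb_ge0. Qed.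

Lemma nu_scale (A : set B) : measurable A ->
  pushforward mu Lmap A = (cF%:E * mu A)%E.
Proof.
move=> mA.
have := @box_unique R d (pushforward mu Lmap) (mscale (NngNum cF_ge0) mu).
move=> /(_ mL) h; apply: h => //.
- move=> a b hab.
  apply: (etrans (nu_box _ _ hab)); apply: esym.
  apply: (etrans (_ : _ = cF%:E * mu (box a b))%E) => //.
  by rewrite hmu // -EFinM mulrC.
- move=> a b; exact: nu_fin.
Qed.

Definition ssq (y : V) := \sum_i y i ord0 ^+ 2.

Lemma ssq_mx (y : V) : ssq y = (y^T *m y) ord0 ord0.
Proof. by rewrite /ssq mxE; apply: eq_bigr => i _; rewrite !mxE expr2. Qed.

Lemma ssq_Q (y : V) : ssq (Q *m y) = ssq y.
Proof. by rewrite !ssq_mx trmx_mul mulmxA -(mulmxA y^T) hQ mulmx1. Qed.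

Lemma ssq_cont : continuous ssq.
Proof.
apply: cont_sum => j x.
have -> : (fun y : V => y j ord0 ^+ 2) = (fun y : V => y j ord0) \* (fun y : V => y j ord0).
  by apply: funext => y; rewrite expr2.
by apply: continuousM; exact: coord_continuous.
Qed.

Definition Sball : set B := [set y : V | ssq y <= 1].

Lemma mSball : measurable Sball.
Proof. exact: mB_le ssq_cont. Qed.

Lemma ssq_ge (y : V) i : y i ord0 ^+ 2 <= ssq y.
Proof. by rewrite /ssq (bigD1 i) //= lerDl sumr_ge0 // => ? _; rewrite sqr_ge0. Qed.

Lemma Sball_sub : Sball `<=` box (const_mx (-2)) (const_mx 2).
Proof.
move=> y hy i; rewrite !mxE.
have hy' : ssq y <= 1 := hy.
have h := le_trans (ssq_ge y i) hy'; rewrite expr2 in h.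
apply/andP; split; nra.
Qed.

Lemma box_sub : box (const_mx (- (d.+1%:R)^-1)) (const_mx ((d.+1%:R)^-1)) `<=` Sball.
Proof.
move=> y /= hy.
set e := (d.+1%:R)^-1 : R.
have e0 : 0 < e by rewrite invr_gt0 ltr0Sn.
have e1 : e <= 1 by rewrite invr_le1 ?ler1n ?unitfE ?pnatr_eq0 ?ltr0Sn.
apply: le_trans (_ : \sum_(i < d) e <= 1).
  apply: ler_sum => i _; have := hy i; rewrite !mxE expr2 => /andP[h1 h2].
  rewrite -/e in h1 h2.
  have p1 : 0 <= (e - y i ord0) * (e + y i ord0) by apply: mulr_ge0; lra.
  have p2 : 0 <= e * (1 - e) by apply: mulr_ge0; lra.
  nra.
rewrite sumr_const card_ord -mulr_natl /e.
by rewrite ler_pdivrMr ?ltr0Sn // mul1r ler_nat.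
Qed.

Lemma Sball_pos : (0 < mu Sball)%E.
Proof.
set e := (d.+1%:R)^-1 : R.
have e0 : 0 < e by rewrite invr_gt0 ltr0Sn.
have le1 : (mu (box (const_mx (- e)%R) (const_mx e)) <= mu Sball)%E.
  apply: le_measure; rewrite ?inE; [exact: mB_box|exact: mSball|exact: box_sub].
apply: lt_le_trans le1.
rewrite hmu; last by move=> i; rewrite !mxE; lra.
rewrite lte_fin; apply: prodr_gt0 => i _; rewrite !mxE; lra.
Qed.

Lemma Sball_fin : (mu Sball < +oo)%E.
Proof.
apply: le_lt_trans (@box_fin R d mu hmu (const_mx (-2)) (const_mx 2)).
apply: le_measure; rewrite ?inE; [exact: mSball|exact: mB_box|exact: Sball_sub].
Qed.

Lemma cF1 : cF = 1.
Proof.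
have h := nu_scale _ mSball.
have LS : Lmap @^-1` Sball = Sball.
  by apply/seteqP; split => y; rewrite /preimage /Sball /Lmap /= ssq_Q.
rewrite /pushforward LS in h.
have fin : mu Sball \is a fin_num by rewrite ge0_fin_numE ?Sball_fin.
pose r := fine (mu Sball).
have hr : mu Sball = r%:E by rewrite fineK.
have pos : 0 < r by rewrite -lte_fin -hr Sball_pos.
rewrite hr -EFinM in h; have h' := EFin_inj h.
by apply: (@mulIf _ r); [rewrite gt_eqF|rewrite mul1r -h'].
Qed.

Lemma rot_inv (A : set B) : measurable A -> mu (Lmap @^-1` A) = mu A.
Proof. by move=> mA; have := nu_scale _ mA; rewrite cF1 mul1e. Qed.

End rotation.

Lemma rigid_inv (R : realType) (d : nat) (mu : {measure set Rd_borel R d -> \bar R})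
  (hmu : is_lebesgue_measure mu) (Q : 'M[R]_d) (hQ : Q^T *m Q = 1%:M) (g : 'cV[R]_d)
  (A : set (Rd_borel R d)) : measurable A ->
  mu ((fun x : Rd_borel R d => (Q *m x + g : Rd_borel R d)) @^-1` A) = mu A.
Proof.
move=> mA.
have mg : measurable_fun (setT : set (Rd_borel R d)) (fun x : Rd_borel R d => (x + g : Rd_borel R d)).
  by apply: mB_fun => i; exact: cont_shift.
have mgA : measurable ((fun x : Rd_borel R d => (x + g : Rd_borel R d)) @^-1` A).
  by rewrite -[X in measurable X]setTI; apply: mg.
transitivity (mu (@Lmap R d Q @^-1` ((fun x : Rd_borel R d => (x + g : Rd_borel R d)) @^-1` A))) => //.
by rewrite rot_inv // leb_shift.
Qed.

Theorem theorem1 (R : realType) (d k dh dQ L : nat) (tau : R) (sigma : R -> R)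
  (mu : {measure set (Rd_borel R d) -> \bar R})
  (th : ino_params R k dh dQ)
  (Om : set 'cV[R]_d) (f ft : 'cV[R]_d -> 'cV[R]_d)
  (enc enct : 'cV[R]_d -> 'cV[R]_d -> 'cV[R]_k)
  (g : 'cV[R]_d) (Q : 'M[R]_d) :
  (0 < d)%N -> 0 < tau -> (0 < dh)%N -> (0 < L)%N -> (0 < dQ)%N ->
  is_lebesgue_measure mu ->
  bounded_domain Om ->
  orthogonal_mx Q ->
  (* transformed input: ft (Q x + g) = Q f(x) on Om *)
  (forall x, Om x -> ft (Q *m x + g) = Q *m f x) ->
  (* frame invariance of the edge encoding *)
  (forall x y, Om x -> Om y -> enct (Q *m x + g) (Q *m y + g) = enc x y) ->
  forall x, Om x ->
    ino_scalar L tau sigma mu th [set Q *m z + g | z in Om] enct ft (Q *m x + g)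
    = ino_scalar L tau sigma mu th Om enc f x.
Proof.
move=> _ _ _ _ _ hmu _ hQ hft henc.
have hQ' : Q *m Q^T = 1%:M by apply: mulmx1C.
have hQt : Q^T^T *m Q^T = 1%:M by rewrite trmxK.
pose S := fun x : Rd_borel R d => (Q *m x + g : Rd_borel R d).
pose Si := fun x : Rd_borel R d => (Q^T *m x + - (Q^T *m g) : Rd_borel R d).
have mS : measurable_fun setT S by apply: mB_fun => i; exact: cont_aff.
have mSi : measurable_fun setT Si by apply: mB_fun => i; exact: cont_aff.
have pS : forall A, measurable A -> mu (S @^-1` A) = mu A.
  by move=> A mA; exact: rigid_inv.
have pSi : forall A, measurable A -> mu (Si @^-1` A) = mu A.
  by move=> A mA; exact: rigid_inv.
have SSi : forall x, S (Si x) = x.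
  by move=> x; rewrite /S /Si mulmxDr mulmxN !mulmxA hQ' !mul1mx subrK.
have SiS : forall x, Si (S x) = x.
  by move=> x; rewrite /S /Si mulmxDr mulmxA hQ mul1mx addrK.
have preS : S @^-1` [set Q *m z + g | z in Om] = Om.
  apply/seteqP; split => y /=.
    by move=> [z Oz] /(congr1 Si); rewrite -/(S z) -/(S y) !SiS => <-.
  by move=> Oy; exists y.
have enQ : forall v : 'cV[R]_d, enorm (Q *m v) = enorm v.
  by move=> v; rewrite /enorm; congr Num.sqrt; exact: (ssq_Q _ _ _ hQ v).
have key : forall j y, Om y ->
    ino_hidden tau sigma mu th [set Q *m z + g | z in Om] enct ft j (Q *m y + g)
    = ino_hidden tau sigma mu th Om enc f j y.
  elim => [|j IH] y Oy.
    rewrite [LHS]/= [RHS]/=.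
    by rewrite hft // enQ.
  rewrite [LHS]/= [RHS]/=.
  rewrite (IH y Oy).
  have EI : ino_int mu th [set Q *m z + g | z in Om] enct ft
      (ino_hidden tau sigma mu th [set Q *m z + g | z in Om] enct ft j) (Q *m y + g)
      = ino_int mu th Om enc f (ino_hidden tau sigma mu th Om enc f j) y.
    rewrite /ino_int; apply: eq_mx => i o.
    rewrite /Rintegral.
    rewrite (@integral_transport _ _ _ mu S Si mS pS mSi pSi SSi) preS.
    apply: congr1; apply: eq_integral => z /[!inE] Oz.
    rewrite /S (IH z Oz) /ino_kernel (henc y z Oy Oz) (hft y Oy) (hft z Oz) !enQ.
    reflexivity.
  rewrite EI.
  reflexivity.
move=> x Ox; rewrite /ino_scalar (key L x Ox).
reflexivity.
Qed.
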